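(* Let $X=X_\Sigma$ be the toric manifold described in the context, and let $S_1$ be the torus invariant surface associated to the $(d-2)$-dimensional cone of $\Sigma$ generated by all ray generators except $v_1,y_1,z_1,t_1,u_1$. Then $$2(\mathrm{ch}_2(X)\cdot S_1)=-p_1-p_4+b_1p_2-2(c_2+\cdots+c_{p_2})-(b_1+1)+\sum_{i=2}^{p_3}\bigl(b_1-2b_i-1\bigr).$$
   Context: Let $N=\mathbb{Z}^d$ and let $\Sigma$ be a smooth projective complete fan in $N_\mathbb{R}$ whose set of primitive ray generators is $\{v_1,\dots,v_{p_0},y_1,\dots,y_{p_1},z_1,\dots,z_{p_2},t_1,\dots,t_{p_3},u_1,\dots,u_{p_4}\}$, where $p_0,\dots,p_4$ are positive integers with $p_0+p_1+p_2+p_3+p_4-3=d$. A primitive collection is a set of ray generators not generating a cone of $\Sigma$ while every proper subset does. The primitive collections of $\Sigma$ are exactly $\{v_i\}\cup\{y_j\}$, $\{y_j\}\cup\{z_j\}$, $\{z_j\}\cup\{t_j\}$, $\{t_j\}\cup\{u_j\}$, $\{u_j\}\cup\{v_j\}$ (all elements of the indicated groups), with primitive relations $v_1+\cdots+v_{p_0}+y_1+\cdots+y_{p_1}=c_2z_2+\cdots+c_{p_2}z_{p_2}+(b_1+1)t_1+\cdots+(b_{p_3}+1)t_{p_3}$, $y_1+\cdots+y_{p_1}+z_1+\cdots+z_{p_2}=u_1+\cdots+u_{p_4}$, $z_1+\cdots+z_{p_2}+t_1+\cdots+t_{p_3}=0$, $t_1+\cdots+t_{p_3}+u_1+\cdots+u_{p_4}=y_1+\cdots+y_{p_1}$,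 $u_1+\cdots+u_{p_4}+v_1+\cdots+v_{p_0}=c_2z_2+\cdots+c_{p_2}z_{p_2}+b_1t_1+\cdots+b_{p_3}t_{p_3}$, with $b_i,c_j\in\mathbb{Z}_{\ge0}$, and $c_2=\min_j c_j$, $b_1=\min_i b_i$. $X=X_\Sigma$. With $D_1,\dots,D_n$ the torus invariant prime divisors, $\mathrm{ch}_2(X)=\frac12\sum D_i^2$. *)

(* Defs.v *)
(* Combinatorial model of the toric manifold X_Sigma of the
   paper (Picard rank 3, "pentagon" primitive collections) and of its
   intersection numbers of torus-invariant divisors. *)
From HB Require Import structures.
From mathcomp Require Import all_boot all_order all_algebra.
Set Implicit Arguments. Unset Strict Implicit. Unset Printing Implicit Defensive.
Import Order.TTheory GRing.Theory Num.Theory.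
Local Open Scope ring_scope.

(* Groups of rays: 0 = v, 1 = y, 2 = z, 3 = t, 4 = u. *)
Definition gV : 'I_5 := @Ordinal 5 0 isT.
Definition gY : 'I_5 := @Ordinal 5 1 isT.
Definition gZ : 'I_5 := @Ordinal 5 2 isT.
Definition gT : 'I_5 := @Ordinal 5 3 isT.
Definition gU : 'I_5 := @Ordinal 5 4 isT.

Definition grp_size (p0 p1 p2 p3 p4 : nat) (g : 'I_5) : nat :=
  nth 0%N [:: p0; p1; p2; p3; p4] g.

(* the rays: the k-th (0-based; paper index k+1) ray of group g *)
Definition ray (p : 'I_5 -> nat) := {g : 'I_5 & 'I_(p g)}.
Definition mkr (p : 'I_5 -> nat) (g : 'I_5) (k : 'I_(p g)) : ray p :=
  Tagged (fun g => 'I_(p g)) k.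

(* weighted block sum  \sum_{k=1}^{p_g} w(k) * (k-th ray of group g)  (1-based weights) *)
Definition wsum (p : 'I_5 -> nat) (d : nat) (gen : ray p -> 'rV[int]_d)
  (g : 'I_5) (w : nat -> int) : 'rV[int]_d :=
  \sum_(k < p g) w k.+1 *: gen (mkr k).
Definition blk (p : 'I_5 -> nat) (d : nat) (gen : ray p -> 'rV[int]_d) (g : 'I_5) :=
  wsum gen g (fun _ => 1).

Definition pcs : seq (nat * nat) := [:: (0,1); (1,2); (2,3); (3,4); (4,0)]%N.
Definition prim_coll (p : 'I_5 -> nat) (i j : nat) : {set ray p} :=
  [set r : ray p | (val (tag r) == i) || (val (tag r) == j)].
(* a set of rays spans a cone of Sigma iff it contains no primitive collection *)
Definition is_cone (p : 'I_5 -> nat) (S : {set ray p}) : bool :=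
  all (fun ij => ~~ (prim_coll p ij.1 ij.2 \subset S)) pcs.

Definition smooth_fan (p : 'I_5 -> nat) (d : nat) (gen : ray p -> 'rV[int]_d) :=
  forall S : {set ray p}, is_cone S -> #|S| = d ->
    forall w : 'rV[int]_d, exists! a : {ffun ray p -> int},
      (forall r, r \notin S -> a r = 0) /\ w = \sum_r a r *: gen r.

Definition complete_fan (p : 'I_5 -> nat) (d : nat) (gen : ray p -> 'rV[int]_d) :=
  forall w : 'rV[int]_d, exists S : {set ray p}, is_cone S /\
    exists a : {ffun ray p -> nat},
      (forall r, r \notin S -> a r = 0%N) /\ w = \sum_r (a r)%:Z *: gen r.

(* Intersection numbers D^m = prod_r D_r^(m r) of torus-invariant prime divisors,
   for multisets m of rays of total degree d (= dim X). *)
Definition mdeg (p : 'I_5 -> nat) (m : {ffun ray p -> nat}) : nat := (\sum_r m r)%N.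
Definition msupp (p : 'I_5 -> nat) (m : {ffun ray p -> nat}) : {set ray p} :=
  [set r | (0 < m r)%N].
Definition madd1 (p : 'I_5 -> nat) (m : {ffun ray p -> nat}) (s : ray p) :
  {ffun ray p -> nat} := [ffun r => (m r + (r == s))%N].

Definition intersection_numbers (p : 'I_5 -> nat) (d : nat)
  (gen : ray p -> 'rV[int]_d) (I : {ffun ray p -> nat} -> int) : Prop :=
  [/\ forall m, mdeg m = d -> ~~ is_cone (msupp m) -> I m = 0,
      forall m, mdeg m = d -> (forall r, (m r <= 1)%N) -> is_cone (msupp m) -> I m = 1
    & forall m (u : 'cV[int]_d), (mdeg m).+1 = d ->
        \sum_r (gen r *m u) 0 0 * I (madd1 m r) = 0].

(* 2 (ch_2(X) . S_1) = sum_r D_r^2 . S_1, where S_1 = V(tau_1) and tau_1 is the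
   cone generated by all rays except the first ray of each group. *)
Definition two_ch2_S1 (p : 'I_5 -> nat) (I : {ffun ray p -> nat} -> int) : int :=
  \sum_(s : ray p) I [ffun r => ((val (tagged r) != 0%N) + 2 * (r == s))%N].

(* Main.v *)
Require Import Defs.
From HB Require Import structures.
From mathcomp Require Import all_boot all_order all_algebra.
Import Order.TTheory GRing.Theory Num.Theory.
Local Open Scope ring_scope.
From mathcomp Require Import ring zify.
Set Implicit Arguments. Unset Strict Implicit. Unset Printing Implicit Defensive.

Section Gen.
Variable p : 'I_5 -> nat.
Hypothesis pos : forall g, (0 < p g)%N.
Variable d : nat.
Variable gen : ray p -> 'rV[int]_d.

Definition f (g : 'I_5) : ray p := mkr (Ordinal (pos g)).
Definition Tset : {set ray p} := [set r : ray p | val (tagged r) != 0%N].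

Lemma f_tag g : tag (f g) = g. Proof. by []. Qed.
Lemma f_val g : val (tagged (f g)) = 0%N. Proof. by []. Qed.
Lemma f_notT g : f g \notin Tset. Proof. by rewrite inE. Qed.
Lemma f_inj : injective f.
Proof. by move=> a b /(congr1 (@tag _ _)). Qed.

Lemma notT_f r : r \notin Tset -> r = f (tag r).
Proof.
case: r => g k; rewrite inE /= negbK => /eqP k0.
by rewrite /f /mkr; congr Tagged; apply/val_inj.
Qed.

Lemma sub_pc (i j : 'I_5) (S : {set ray p}) : Tset \subset S ->
  (prim_coll p i j \subset S) = (f i \in S) && (f j \in S).
Proof.
move=> TS; apply/idP/andP.
  by move=> /subsetP H; split; apply: H; rewrite inE f_tag eqxx ?orbT.
case=> Hi Hj; apply/subsetP => r; rewrite inE => Hr.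
case: (boolP (r \in Tset)) => rT; first by apply: (subsetP TS).
rewrite (notT_f rT); case/orP: Hr => /eqP e.
  by have -> : tag r = i by apply/val_inj.
by have -> : tag r = j by apply/val_inj.
Qed.

Lemma inS2 i a b : (f i \in Tset :|: [set f a; f b]) = (i == a) || (i == b).
Proof.
rewrite in_setU (negbTE (f_notT i)) /= !inE.
by rewrite !(inj_eq f_inj).
Qed.

Lemma cone2 a b : is_cone (Tset :|: [set f a; f b]) =
  all (fun ij => ~~ [&& (ij.1 == val a) || (ij.1 == val b) & (ij.2 == val a) || (ij.2 == val b)]) pcs.
Proof.
have TS : Tset \subset Tset :|: [set f a; f b] by apply: subsetUl.
rewrite /is_cone /pcs /=.
rewrite (sub_pc gV gY TS) (sub_pc gY gZ TS) (sub_pc gZ gT TS) (sub_pc gT gU TS) (sub_pc gU gV TS).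
by rewrite !inS2.
Qed.

Lemma compT : ~: Tset = f @: setT.
Proof.
apply/setP => r; rewrite inE; apply/idP/imsetP.
  by move=> /notT_f ->; exists (tag r).
by case=> g _ ->; apply: f_notT.
Qed.

Lemma card_ray : #|{: ray p}| = (\sum_(g < 5) p g)%N.
Proof.
rewrite card_tagged sumnE big_map big_enum /=.
by apply: eq_bigr => i _; rewrite card_ord.
Qed.

Lemma cardT : (#|Tset| + 5 = \sum_(g < 5) p g)%N.
Proof.
rewrite -card_ray -(cardsC Tset) compT card_imset ?cardsT ?card_ord //; exact: f_inj.
Qed.


Lemma dual (S : {set ray p}) s : smooth_fan gen -> is_cone S -> #|S| = d ->
  exists u : 'cV[int]_d, forall r, r \in S -> (gen r *m u) 0 0 = (r == s)%:Z.
Proof.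
move=> hs hc hS.
have H j : exists a : {ffun ray p -> int},
    (forall r, r \notin S -> a r = 0) /\ delta_mx 0 j = \sum_r a r *: gen r.
  by have [a [Ha _]] := hs S hc hS (delta_mx 0 j); exists a.
have [A HA] := fin_all_exists H.
exists (\col_j A j s) => r rS.
have [a0 [_ Uniq]] := hs S hc hS (gen r).
have e1 : a0 = [ffun x => \sum_j gen r 0 j * A j x].
  apply: Uniq; split.
    move=> x xS; rewrite ffunE big1 // => j _.
    by rewrite (proj1 (HA j)) // mulr0.
  under eq_bigr do rewrite ffunE scaler_suml.
  rewrite exchange_big /= [LHS]row_sum_delta; apply: eq_bigr => j _.
  by rewrite (proj2 (HA j)) scaler_sumr; apply: eq_bigr => x _; rewrite scalerA.
have e2 : a0 = [ffun x => (x == r)%:Z].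
  apply: Uniq; split.
    by move=> x xS; rewrite ffunE; case: eqP => // e; rewrite e rS in xS.
  rewrite (bigD1 r) //= ffunE eqxx scale1r big1 ?addr0 // => x /negbTE xr.
  by rewrite ffunE xr scale0r.
rewrite mxE.
have := congr1 (fun a : {ffun ray p -> int} => a s) e1.
rewrite e2 !ffunE /= => E.
rewrite eq_sym E; apply: eq_bigr => j _; by rewrite mxE.
Qed.

Definition phi (u : 'cV[int]_d) (x : 'rV[int]_d) : int := (x *m u) 0 0.
Lemma phiD u x y : phi u (x + y) = phi u x + phi u y.
Proof. by rewrite /phi mulmxDl mxE. Qed.
Lemma phiZ u a x : phi u (a *: x) = a * phi u x.
Proof. by rewrite /phi -scalemxAl mxE. Qed.
Lemma phi0 u : phi u 0 = 0.
Proof. by rewrite /phi mul0mx mxE. Qed.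
Lemma phi_sum u (I : finType) (P : pred I) (F : I -> 'rV[int]_d) :
  phi u (\sum_(i | P i) F i) = \sum_(i | P i) phi u (F i).
Proof. by rewrite /phi mulmx_suml summxE. Qed.

Lemma phi_wsum u s g w : (forall r, r \in Tset -> phi u (gen r) = (r == s)%:Z) ->
  phi u (wsum gen g w) = w 1%N * phi u (gen (f g)) +
    (if (tag s == g) && (val (tagged s) != 0%N) then w (val (tagged s)).+1 else 0).
Proof.
move=> Hphi; rewrite /wsum phi_sum (bigD1 (Ordinal (pos g))) //= phiZ.
congr (_ + _).
have -> : \sum_(k < p g | k != Ordinal (pos g)) phi u (w k.+1 *: gen (mkr k)) =
   \sum_(k < p g | k != Ordinal (pos g)) w k.+1 * (mkr k == s)%:Z.
  apply: eq_bigr => k hk; rewrite phiZ Hphi // inE /=.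
  by apply: contraNneq hk => e; apply/eqP/val_inj.
case: s Hphi => g' k' Hphi /=.
case: (eqVneq g' g) => [eg|neg].
  subst g'; rewrite /=.
  under eq_bigr do rewrite /mkr eq_Tagged /=.
  case: (boolP (val k' != 0%N)) => hk'.
    rewrite (bigD1 k') /=; last by apply: contra hk' => /eqP ->.
    rewrite eqxx mulr1 big1 ?addr0 // => k /andP [_ /negbTE ->]; by rewrite mulr0.
  rewrite big1 // => k hk.
  have -> : (k == k') = false.
    apply/negbTE; apply: contra hk => /eqP ->; apply/eqP/val_inj => /=.
    by apply/eqP; rewrite negbK in hk'.
  by rewrite mulr0.
rewrite big1 // => k _.
have -> : (mkr k == Tagged (fun g => 'I_(p g)) k') = false.
  by apply/negbTE/negP => /eq_tag /= e; rewrite e eqxx in neg.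
by rewrite mulr0.
Qed.

Definition indS (A : {set ray p}) : {ffun ray p -> nat} := [ffun r => (r \in A : nat)].

Lemma mdeg_ind A : mdeg (indS A) = #|A|.
Proof.
rewrite /mdeg -sum1_card [in RHS]big_mkcond /=; apply: eq_bigr => r _.
by rewrite ffunE; case: (r \in A).
Qed.

Lemma mdeg_add (m : {ffun ray p -> nat}) s : mdeg (madd1 m s) = (mdeg m).+1.
Proof.
rewrite /mdeg; under eq_bigr do rewrite ffunE.
rewrite big_split /=.
have -> : (\sum_r (r == s))%N = 1%N.
  by rewrite (bigD1 s) //= big1 ?eqxx // => r /negbTE ->.
by rewrite addn1.
Qed.

Lemma madd1C (m : {ffun ray p -> nat}) x y : madd1 (madd1 m x) y = madd1 (madd1 m y) x.
Proof. by apply/ffunP => r; rewrite !ffunE -!addnA [((r == x) + _)%N]addnC. Qed.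

Lemma madd_ind2 a b : a != b ->
  madd1 (madd1 (indS Tset) (f a)) (f b) = indS (Tset :|: [set f a; f b]).
Proof.
move=> hab; apply/ffunP => r; rewrite !ffunE.
case: (boolP (r \in Tset)) => rT.
  have ha : (r == f a) = false by apply/negbTE; apply: contraTneq rT => ->; apply: f_notT.
  have hb : (r == f b) = false by apply/negbTE; apply: contraTneq rT => ->; apply: f_notT.
  by rewrite ha hb in_setU rT.
have e := notT_f rT; rewrite e inS2 !(inj_eq f_inj) /=.
case: (tag r =P a) => [ea|na]; case: (tag r =P b) => [eb|nb] //=.
by rewrite -ea -eb eqxx in hab.
Qed.

Lemma msupp_ind A : msupp (indS A) = A.
Proof. by apply/setP => r; rewrite !inE ffunE; case: (r \in A). Qed.

Lemma sum5 (R : nmodType) (G : 'I_5 -> R) :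
  \sum_(g < 5) G g = G gV + G gY + G gZ + G gT + G gU.
Proof.
rewrite !big_ord_recl big_ord0 addr0 !addrA.
by congr (G _ + G _ + G _ + G _ + G _); apply/val_inj.
Qed.

Lemma sum_split (R : nmodType) (F : ray p -> R) :
  \sum_r F r = \sum_(r in Tset) F r +
    (F (f gV) + F (f gY) + F (f gZ) + F (f gT) + F (f gU)).
Proof.
rewrite (bigID (fun r => r \in Tset)) /=; congr (_ + _).
rewrite (eq_bigl (fun r => r \in ~: Tset)); last by move=> r /=; rewrite in_setC.
rewrite compT big_imset /=; last by move=> x y _ _; apply: f_inj.
by rewrite (eq_bigl xpredT) ?sum5 // => g; rewrite inE.
Qed.

Lemma sumT_ind (G : ray p -> int) s :
  \sum_(r in Tset) (r == s)%:Z * G r = (s \in Tset)%:Z * G s.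
Proof.
case: (boolP (s \in Tset)) => sT.
  rewrite (bigD1 s) //= eqxx mul1r big1 ?addr0 ?mul1r // => r /andP [_ /negbTE ->].
  by rewrite mul0r.
rewrite mul0r big1 // => r rT.
have -> : (r == s) = false by apply/negbTE; apply: contraNneq sT => <-.
by rewrite mul0r.
Qed.


Lemma card2 a b : a != b -> #|Tset :|: [set f a; f b]| = (#|Tset| + 2)%N.
Proof.
move=> hab; rewrite cardsU cards2 (inj_eq f_inj) hab.
have -> : Tset :&: [set f a; f b] = set0.
  apply/setP => r; rewrite !inE; apply/negbTE; apply/negP => /andP [rT /orP [] /eqP e];
  by move: rT; rewrite e.
by rewrite cards0 subn0.
Qed.

Variable I : {ffun ray p -> nat} -> int.
Hypothesis hI : intersection_numbers gen I.
Hypothesis hTd : (#|Tset| + 2)%N = d.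
Hypothesis hsm : smooth_fan gen.

Definition Q x y := I (madd1 (madd1 (indS Tset) x) y).

Lemma QC x y : Q x y = Q y x.
Proof. by rewrite /Q madd1C. Qed.

Lemma Q2 a b : a != b -> Q (f a) (f b) = (is_cone (Tset :|: [set f a; f b]) : nat)%:Z.
Proof.
move=> hab; rewrite /Q madd_ind2 //; case: hI => h1 h2 _.
case: (boolP (is_cone _)) => hc.
  rewrite h2 ?msupp_ind ?mdeg_ind ?card2 //.
  by move=> r; rewrite ffunE; case: (_ \in _).
by rewrite h1 ?msupp_ind ?mdeg_ind ?card2.
Qed.

Lemma Qrel x u : \sum_r phi u (gen r) * Q x r = 0.
Proof.
case: hI => _ _ h3; apply: h3.
by rewrite mdeg_add mdeg_ind -hTd addn2.
Qed.

Lemma Qrel2 x u s : (forall r, r \in Tset -> phi u (gen r) = (r == s)%:Z) ->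
  (s \in Tset)%:Z * Q x s + (phi u (gen (f gV)) * Q x (f gV) + phi u (gen (f gY)) * Q x (f gY)
   + phi u (gen (f gZ)) * Q x (f gZ) + phi u (gen (f gT)) * Q x (f gT)
   + phi u (gen (f gU)) * Q x (f gU)) = 0.
Proof.
move=> hu; rewrite -(Qrel x u) sum_split -sumT_ind; congr (_ + _).
by apply: eq_bigr => r rT; rewrite hu.
Qed.

Lemma dual2 a b s : a != b -> is_cone (Tset :|: [set f a; f b]) ->
  exists u, [/\ forall r, r \in Tset -> phi u (gen r) = (r == s)%:Z,
    phi u (gen (f a)) = (f a == s)%:Z & phi u (gen (f b)) = (f b == s)%:Z].
Proof.
move=> hab hc; have [u hu] := dual s hsm hc (etrans (card2 hab) hTd).
exists u; split.
- by move=> r rT; apply: hu; rewrite in_setU rT.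
- by apply: hu; rewrite !inE eqxx orbT.
- by apply: hu; rewrite !inE eqxx !orbT.
Qed.

Variables b c : nat -> nat.
Hypothesis rel1 : blk gen gV + blk gen gY =
          wsum gen gZ (fun j => if j == 1%N then 0 else (c j)%:Z)
          + wsum gen gT (fun i => (b i)%:Z + 1).
Hypothesis rel2 : blk gen gY + blk gen gZ = blk gen gU.
Hypothesis rel3 : blk gen gZ + blk gen gT = 0.
Hypothesis rel4 : blk gen gT + blk gen gU = blk gen gY.
Hypothesis rel5 : blk gen gU + blk gen gV =
          wsum gen gZ (fun j => if j == 1%N then 0 else (c j)%:Z)
          + wsum gen gT (fun i => (b i)%:Z).

Definition D (s : ray p) g : int := if (tag s == g) && (val (tagged s) != 0%N) then 1 else 0.
Definition Zc (s : ray p) : int := if (tag s == gZ) && (val (tagged s) != 0%N) then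
   (if (val (tagged s)).+1 == 1%N then 0 else (c (val (tagged s)).+1)%:Z) else 0.
Definition Tb (s : ray p) : int := if (tag s == gT) && (val (tagged s) != 0%N) then
   (b (val (tagged s)).+1)%:Z else 0.

Lemma releqs u s : (forall r, r \in Tset -> phi u (gen r) = (r == s)%:Z) ->
  let al g := phi u (gen (f g)) in
  [/\ al gV + D s gV + (al gY + D s gY) = Zc s + (((b 1%N)%:Z + 1) * al gT + (Tb s + D s gT)),
      al gY + D s gY + (al gZ + D s gZ) = al gU + D s gU,
      al gZ + D s gZ + (al gT + D s gT) = 0,
      al gT + D s gT + (al gU + D s gU) = al gY + D s gY &
      al gU + D s gU + (al gV + D s gV) = Zc s + ((b 1%N)%:Z * al gT + Tb s)].
Proof.
move=> hu al.
have Hb g : phi u (blk gen g) = al g + D s g.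
  by rewrite /blk (phi_wsum _ _ hu) mul1r.
have HZ : phi u (wsum gen gZ (fun j => if j == 1%N then 0 else (c j)%:Z)) = Zc s.
  by rewrite (phi_wsum _ _ hu) /= mul0r add0r.
split.
- have := congr1 (phi u) rel1; rewrite !phiD !Hb HZ (phi_wsum _ _ hu); move=> ->; congr (_ + (_ + _)).
  by rewrite /Tb /D; case: ifP.
- by have := congr1 (phi u) rel2; rewrite !phiD !Hb.
- by have := congr1 (phi u) rel3; rewrite !phiD !Hb phi0.
- by have := congr1 (phi u) rel4; rewrite !phiD !Hb.
- by have := congr1 (phi u) rel5; rewrite !phiD !Hb HZ (phi_wsum _ _ hu).
Qed.


Lemma QVY : Q (f gV) (f gY) = 0.
Proof. by rewrite Q2 // cone2. Qed.
Lemma QVZ : Q (f gV) (f gZ) = 1.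
Proof. by rewrite Q2 // cone2. Qed.
Lemma QVT : Q (f gV) (f gT) = 1.
Proof. by rewrite Q2 // cone2. Qed.
Lemma QVU : Q (f gV) (f gU) = 0.
Proof. by rewrite Q2 // cone2. Qed.
Lemma QYV : Q (f gY) (f gV) = 0.
Proof. by rewrite Q2 // cone2. Qed.
Lemma QYZ : Q (f gY) (f gZ) = 0.
Proof. by rewrite Q2 // cone2. Qed.
Lemma QYT : Q (f gY) (f gT) = 1.
Proof. by rewrite Q2 // cone2. Qed.
Lemma QYU : Q (f gY) (f gU) = 1.
Proof. by rewrite Q2 // cone2. Qed.
Lemma QZV : Q (f gZ) (f gV) = 1.
Proof. by rewrite Q2 // cone2. Qed.
Lemma QZY : Q (f gZ) (f gY) = 0.
Proof. by rewrite Q2 // cone2. Qed.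
Lemma QZT : Q (f gZ) (f gT) = 0.
Proof. by rewrite Q2 // cone2. Qed.
Lemma QZU : Q (f gZ) (f gU) = 1.
Proof. by rewrite Q2 // cone2. Qed.
Lemma QTV : Q (f gT) (f gV) = 1.
Proof. by rewrite Q2 // cone2. Qed.
Lemma QTY : Q (f gT) (f gY) = 1.
Proof. by rewrite Q2 // cone2. Qed.
Lemma QTZ : Q (f gT) (f gZ) = 0.
Proof. by rewrite Q2 // cone2. Qed.
Lemma QTU : Q (f gT) (f gU) = 0.
Proof. by rewrite Q2 // cone2. Qed.
Lemma QUV : Q (f gU) (f gV) = 0.
Proof. by rewrite Q2 // cone2. Qed.
Lemma QUY : Q (f gU) (f gY) = 1.
Proof. by rewrite Q2 // cone2. Qed.
Lemma QUZ : Q (f gU) (f gZ) = 1.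
Proof. by rewrite Q2 // cone2. Qed.
Lemma QUT : Q (f gU) (f gT) = 0.
Proof. by rewrite Q2 // cone2. Qed.

Lemma fneT g : (f g \in Tset) = false. Proof. exact: negbTE (f_notT g). Qed.
Lemma f_eq (x y : 'I_5) : (f x == f y) = (x == y). Proof. by apply/eqP/eqP => [/f_inj|->]. Qed.

Lemma QYY_val : Q (f gY) (f gY) = -1.
Proof.
have [u [hu ha hb]] := dual2 (f gY) (isT : gY != gT) (ltac:(by rewrite cone2) : is_cone (Tset :|: [set f gY; f gT])).
have [E1 E2 E3 E4 E5] := releqs hu.
have R := Qrel2 (f gY) hu.
rewrite /D /Zc /Tb /= in E1 E2 E3 E4 E5.
rewrite fneT QYV QYZ QYT QYU /= in R.
rewrite ha hb !f_eq /= in R E1 E2 E3 E4 E5.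
clear E1 E5. lia.
Qed.

Lemma QVV_val : Q (f gV) (f gV) = 0.
Proof.
have [u [hu ha hb]] := dual2 (f gV) (isT : gV != gZ) (ltac:(by rewrite cone2) : is_cone (Tset :|: [set f gV; f gZ])).
have [E1 E2 E3 E4 E5] := releqs hu.
have R := Qrel2 (f gV) hu.
rewrite /D /Zc /Tb /= in E1 E2 E3 E4 E5.
rewrite fneT QVY QVZ QVT QVU /= in R.
rewrite ha hb !f_eq /= in R E1 E2 E3 E4 E5.
have ht : phi u (gen (f gT)) = 0 by clear E1 E5; lia.
rewrite ht in E1 E5.
lia.
Qed.

Lemma QZZ_val : Q (f gZ) (f gZ) = (b 1%N)%:Z.
Proof.
have [u [hu ha hb]] := dual2 (f gZ) (isT : gZ != gU) (ltac:(by rewrite cone2) : is_cone (Tset :|: [set f gZ; f gU])).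
have [E1 E2 E3 E4 E5] := releqs hu.
have R := Qrel2 (f gZ) hu.
rewrite /D /Zc /Tb /= in E1 E2 E3 E4 E5.
rewrite fneT QZV QZY QZT QZU /= in R.
rewrite ha hb !f_eq /= in R E1 E2 E3 E4 E5.
have ht : phi u (gen (f gT)) = -1 by clear E1 E5; lia.
rewrite ht in E1 E5.
lia.
Qed.

Lemma QTT_val : Q (f gT) (f gT) = - ((b 1%N)%:Z + 1).
Proof.
have [u [hu ha hb]] := dual2 (f gT) (isT : gT != gY) (ltac:(by rewrite cone2) : is_cone (Tset :|: [set f gT; f gY])).
have [E1 E2 E3 E4 E5] := releqs hu.
have R := Qrel2 (f gT) hu.
rewrite /D /Zc /Tb /= in E1 E2 E3 E4 E5.
rewrite fneT QTV QTY QTZ QTU /= in R.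
rewrite ha hb !f_eq /= in R E1 E2 E3 E4 E5.
lia.
Qed.

Lemma QUU_val : Q (f gU) (f gU) = -1.
Proof.
have [u [hu ha hb]] := dual2 (f gU) (isT : gU != gY) (ltac:(by rewrite cone2) : is_cone (Tset :|: [set f gU; f gY])).
have [E1 E2 E3 E4 E5] := releqs hu.
have R := Qrel2 (f gU) hu.
rewrite /D /Zc /Tb /= in E1 E2 E3 E4 E5.
rewrite fneT QUV QUY QUZ QUT /= in R.
rewrite ha hb !f_eq /= in R E1 E2 E3 E4 E5.
have ht : phi u (gen (f gT)) = -1 by clear E1 E5; lia.
rewrite ht in E1 E5.
lia.
Qed.

Lemma fT_neq g s : s \in Tset -> (f g == s) = false.
Proof. by move=> sT; apply/negbTE; apply: contraTneq sT => <-; apply: f_notT. Qed.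

Definition qform (bb xt xu xy : int) :=
  - xy ^+ 2 - xu ^+ 2 - (bb + 1) * xt ^+ 2 + 2 * xy * xt + 2 * xy * xu.
Definition alt s := - (D s gZ + D s gT).
Definition alu s := Zc s + (b 1%N)%:Z * alt s + Tb s - D s gU - D s gV.
Definition aly s := alt s + D s gT + alu s + D s gU - D s gY.

Lemma Qss s : s \in Tset -> Q s s = qform (b 1%N)%:Z (alt s) (alu s) (aly s).
Proof.
move=> sT.
have [u [hu ha hb]] := dual2 s (isT : gZ != gV) (ltac:(by rewrite cone2) : is_cone (Tset :|: [set f gZ; f gV])).
rewrite !fT_neq // in ha hb.
have [E1 E2 E3 E4 E5] := releqs hu.
have Rs := Qrel2 s hu.
have Ry := Qrel2 (f gY) hu.
have Rt := Qrel2 (f gT) hu.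
have Ru := Qrel2 (f gU) hu.
rewrite ha hb in E1 E2 E3 E4 E5 Rs Ry Rt Ru.
rewrite sT mul1r QYV QYZ QYT QYU QYY_val in Ry.
rewrite sT mul1r QTV QTZ QTY QTU QTT_val in Rt.
rewrite sT mul1r QUV QUZ QUY QUT QUU_val in Ru.
rewrite sT !mul0r !add0r !addr0 mul1r in Rs.
have ht : phi u (gen (f gT)) = alt s by rewrite /alt; clear E1 E5 Rs Ry Rt Ru; lia.
rewrite ht in E1 E5 Rs Ry Rt Ru.
have hu' : phi u (gen (f gU)) = alu s.
  rewrite /alu; move: E5; set X := (b 1%N)%:Z * alt s; clear E1 Rs Ry Rt Ru; lia.
rewrite hu' in E1 E4 Rs Ry Rt Ru.
have hy : phi u (gen (f gY)) = aly s by rewrite /aly; clear E1 E5 Rs Ry Rt Ru; lia.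
rewrite hy in Rs Ry Rt Ru.
rewrite (QC s (f gY)) (QC s (f gT)) (QC s (f gU)) in Rs.
move/eqP: Rs; rewrite addr_eq0 => /eqP ->.
move/eqP: Ry; rewrite addr_eq0 => /eqP ->.
move/eqP: Rt; rewrite addr_eq0 => /eqP ->.
move/eqP: Ru; rewrite addr_eq0 => /eqP ->.
rewrite /qform -[Posz false]/(0 : int); ring.
Qed.

Lemma two_ch2_Q : two_ch2_S1 I = \sum_s Q s s.
Proof.
apply: eq_bigr => s _; rewrite /Q; congr I; apply/ffunP => r.
by rewrite !ffunE inE mul2n -addnn addnA.
Qed.

Lemma sum_groups (F : ray p -> int) :
  \sum_r F r = \sum_(g < 5) \sum_(k < p g) F (mkr k).
Proof.
rewrite (sig_big_dep xpredT (fun _ _ => true) (fun g (k : 'I_(p g)) => F (mkr k))) /=.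
by apply: eq_bigr => -[g k].
Qed.

Lemma shift_sum n (F : nat -> int) :
  \sum_(k < n | val k != 0%N) F (val k).+1 = \sum_(2 <= j < n.+1) F j.
Proof.
rewrite -(big_mkord (fun k => k != 0%N) (fun k => F k.+1)).
case: n => [|n]; first by rewrite !big_geq.
rewrite big_ltn_cond //= [RHS]big_add1 /= big_nat_cond [RHS]big_nat_cond.
by apply: eq_bigl => i; case: i.
Qed.

Lemma Qgrp g (F : nat -> int) :
  (forall k : 'I_(p g), val k != 0%N -> Q (mkr k) (mkr k) = F (val k).+1) ->
  \sum_(k < p g) Q (mkr k) (mkr k) = Q (f g) (f g) + \sum_(2 <= j < (p g).+1) F j.
Proof.
move=> H; rewrite (bigD1 (Ordinal (pos g))) //=; congr (_ + _).
rewrite -shift_sum (eq_bigl (fun k : 'I_(p g) => val k != 0%N)); last first.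
  by move=> k; rewrite -(inj_eq val_inj).
by apply: eq_bigr => k hk; apply: H.
Qed.

Lemma QssV (k : 'I_(p gV)) : val k != 0%N -> Q (mkr k) (mkr k) = 0.
Proof.
move=> hk; rewrite Qss; last by rewrite inE.
rewrite /qform /aly /alu /alt /D /Zc /Tb /= (negbTE hk) /=.
rewrite ?eqSS ?(negbTE hk); ring.
Qed.

Lemma QssY (k : 'I_(p gY)) : val k != 0%N -> Q (mkr k) (mkr k) = -1.
Proof.
move=> hk; rewrite Qss; last by rewrite inE.
rewrite /qform /aly /alu /alt /D /Zc /Tb /= (negbTE hk) /=.
rewrite ?eqSS ?(negbTE hk); ring.
Qed.

Lemma QssZ (k : 'I_(p gZ)) : val k != 0%N -> Q (mkr k) (mkr k) = (b 1%N)%:Z - 2 * (c (val k).+1)%:Z.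
Proof.
move=> hk; rewrite Qss; last by rewrite inE.
rewrite /qform /aly /alu /alt /D /Zc /Tb /= (negbTE hk) /=.
rewrite ?eqSS ?(negbTE hk); ring.
Qed.

Lemma QssT (k : 'I_(p gT)) : val k != 0%N -> Q (mkr k) (mkr k) = (b 1%N)%:Z - 2 * (b (val k).+1)%:Z - 1.
Proof.
move=> hk; rewrite Qss; last by rewrite inE.
rewrite /qform /aly /alu /alt /D /Zc /Tb /= (negbTE hk) /=.
rewrite ?eqSS ?(negbTE hk); ring.
Qed.

Lemma QssU (k : 'I_(p gU)) : val k != 0%N -> Q (mkr k) (mkr k) = -1.
Proof.
move=> hk; rewrite Qss; last by rewrite inE.
rewrite /qform /aly /alu /alt /D /Zc /Tb /= (negbTE hk) /=.
rewrite ?eqSS ?(negbTE hk); ring.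
Qed.
End Gen.

Theorem mainTheorem4 (p0 p1 p2 p3 p4 : nat)
  (hp0 : (0 < p0)%N) (hp1 : (0 < p1)%N) (hp2 : (0 < p2)%N)
  (hp3 : (0 < p3)%N) (hp4 : (0 < p4)%N)
  (d : nat) (hd : (p0 + p1 + p2 + p3 + p4 = d + 3)%N)
  (gen : ray (grp_size p0 p1 p2 p3 p4) -> 'rV[int]_d)
  (b c : nat -> nat)
  (hb : forall i, (1 <= i <= p3)%N -> (b 1 <= b i)%N)
  (hc : forall j, (2 <= j <= p2)%N -> (c 2 <= c j)%N)
  (ginj : injective gen)
  (rel1 : blk gen gV + blk gen gY =
          wsum gen gZ (fun j => if j == 1%N then 0 else (c j)%:Z)
          + wsum gen gT (fun i => (b i)%:Z + 1))
  (rel2 : blk gen gY + blk gen gZ = blk gen gU)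
  (rel3 : blk gen gZ + blk gen gT = 0)
  (rel4 : blk gen gT + blk gen gU = blk gen gY)
  (rel5 : blk gen gU + blk gen gV =
          wsum gen gZ (fun j => if j == 1%N then 0 else (c j)%:Z)
          + wsum gen gT (fun i => (b i)%:Z))
  (hsmooth : smooth_fan gen) (hcomplete : complete_fan gen)
  (I : {ffun ray (grp_size p0 p1 p2 p3 p4) -> nat} -> int)
  (hI : intersection_numbers gen I) :
  two_ch2_S1 I =
    - (p1%:Z) - (p4%:Z) + (b 1%N)%:Z * (p2%:Z)
    - 2 * (\sum_(2 <= j < p2.+1) (c j)%:Z)
    - ((b 1%N)%:Z + 1)
    + \sum_(2 <= i < p3.+1) ((b 1%N)%:Z - 2 * (b i)%:Z - 1).
Proof.
have pos : forall g, (0 < grp_size p0 p1 p2 p3 p4 g)%N.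
  by case=> [[|[|[|[|[|m]]]]] hm] //=.
have hTd : (#|Tset (grp_size p0 p1 p2 p3 p4)| + 2)%N = d.
  have := cardT pos; rewrite !big_ord_recl big_ord0 /grp_size /=; lia.
rewrite two_ch2_Q sum_groups sum5 /=.
rewrite (@Qgrp _ pos I gV (fun _ => 0) (QssV pos hI hTd hsmooth rel1 rel2 rel3 rel4 rel5)).
rewrite (@Qgrp _ pos I gY (fun _ => -1) (QssY pos hI hTd hsmooth rel1 rel2 rel3 rel4 rel5)).
rewrite (@Qgrp _ pos I gZ (fun j => (b 1%N)%:Z - 2 * (c j)%:Z) (QssZ pos hI hTd hsmooth rel1 rel2 rel3 rel4 rel5)).
rewrite (@Qgrp _ pos I gT (fun j => (b 1%N)%:Z - 2 * (b j)%:Z - 1) (QssT pos hI hTd hsmooth rel1 rel2 rel3 rel4 rel5)).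
rewrite (@Qgrp _ pos I gU (fun _ => -1) (QssU pos hI hTd hsmooth rel1 rel2 rel3 rel4 rel5)).
rewrite (QVV_val pos hI hTd hsmooth rel1 rel2 rel3 rel4 rel5).
rewrite (QYY_val pos hI hTd hsmooth rel1 rel2 rel3 rel4 rel5).
rewrite (QZZ_val pos hI hTd hsmooth rel1 rel2 rel3 rel4 rel5).
rewrite (QTT_val pos hI hTd hsmooth rel1 rel2 rel3 rel4 rel5).
rewrite (QUU_val pos hI hTd hsmooth rel1 rel2 rel3 rel4 rel5).
rewrite /grp_size /= big1_eq !(sumr_const_nat _ _ (-1)) sumrB (sumr_const_nat _ _ (b 1%N)%:Z) -mulr_sumr.
have L (x : int) n : (0 < n)%N -> x *+ (n.+1 - 2) = x * (n%:Z - 1).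
  move=> hn; rewrite -mulr_natr natz -predn_int //; congr (_ * Posz _); lia.
rewrite !L //.
ring.
Qed.
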